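(* Let $F$ and $V$ be finite-dimensional real vector spaces in duality via a nondegenerate pairing $\langle\cdot,\cdot\rangle$, with $V$ carrying its usual topology, and let $Q$ be a positive semi-definite quadratic form on $F$. Let $\mathcal U_0$ be the family of all open subsets of half-spaces $\{\nu\in V:\langle f,\nu\rangle>a\}$ with $a>0$ and $Q(f)=0$. Let $\mathcal U_1$ be the family of all sets $$\{\nu\in V:\langle f_0,\nu\rangle>a_0,\ \langle f_1,\nu\rangle<a_1,\ \dots,\ \langle f_n,\nu\rangle<a_n\}$$ with $n\ge0$, $f_0,\dots,f_n\in F$, $a_0,\dots,a_n\in\mathbb R$, such that either $0<a_0/\sqrt{Q(f_0)}<a_i/\sqrt{Q(f_i)}$ for all $i=1,\dots,n$, or $a_0<0<a_i$ for all $i=1,\dots,n$. Then $\mathcal U_0\cup\mathcal U_1$ is a basis of the topology of $V$.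
   Context: Division convention: $0/0=0$, $a/0=+\infty$ for $a>0$ and $a/0=-\infty$ for $a<0$. *)

(* Defs.v *)
From Stdlib Require Import Reals List.
From mathcomp Require Import all_boot.
Set Implicit Arguments.
Open Scope R_scope.

(* Finite-dimensional real vector spaces modelled in coordinates:
   F = R^m, V = R^n (vectors are functions 'I_k -> R). *)
Definition vec (k : nat) := 'I_k -> R.

Definition pairing (m n : nat) (M : 'I_m -> 'I_n -> R) (f : vec m) (v : vec n) : R :=
  \big[Rplus/0]_(i < m) \big[Rplus/0]_(j < n) (M i j * f i * v j).

Definition nondegenerate (m n : nat) (M : 'I_m -> 'I_n -> R) : Prop :=
  (forall f : vec m, (forall v : vec n, pairing M f v = 0) -> forall i, f i = 0) /\
  (forall v : vec n, (forall f : vec m, pairing M f v = 0) -> forall j, v j = 0).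

Definition qform (m : nat) (S : 'I_m -> 'I_m -> R) (f : vec m) : R :=
  \big[Rplus/0]_(i < m) \big[Rplus/0]_(j < m) (S i j * f i * f j).

Definition psd (m : nat) (S : 'I_m -> 'I_m -> R) : Prop :=
  forall f : vec m, 0 <= qform S f.

Definition is_open (n : nat) (W : vec n -> Prop) : Prop :=
  forall x, W x -> exists eps, 0 < eps /\
    forall y : vec n, (forall j, Rabs (y j - x j) < eps) -> W y.

(* Extended reals for the division convention a/0 = +oo (a>0), -oo (a<0), 0/0 = 0. *)
Inductive ereal := EFin (r : R) | EPInf | EMInf.

Definition elt (x y : ereal) : Prop :=
  match x, y with
  | EFin a, EFin b => a < b
  | EMInf, EFin _ => True
  | EMInf, EPInf => True
  | EFin _, EPInf => True
  | _, _ => False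
  end.

Definition ediv (a b : R) : ereal :=
  match Req_EM_T b 0 with
  | left _ =>
      match Rlt_dec 0 a with
      | left _ => EPInf
      | right _ => match Rlt_dec a 0 with left _ => EMInf | right _ => EFin 0 end
      end
  | right _ => EFin (a / b)
  end.

Definition inU0 (m n : nat) (M : 'I_m -> 'I_n -> R) (S : 'I_m -> 'I_m -> R)
  (U : vec n -> Prop) : Prop :=
  is_open U /\ exists (f : vec m) (a : R), 0 < a /\ qform S f = 0 /\
    forall nu, U nu -> pairing M f nu > a.

(* The family U_1: f_0, a_0 and the list [(f_1,a_1); ...; (f_n,a_n)] (possibly empty). *)
Definition inU1 (m n : nat) (M : 'I_m -> 'I_n -> R) (S : 'I_m -> 'I_m -> R)
  (U : vec n -> Prop) : Prop :=
  exists (f0 : vec m) (a0 : R) (l : list (vec m * R)),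
    (forall nu, U nu <->
       (pairing M f0 nu > a0 /\ Forall (fun p => pairing M (fst p) nu < snd p) l)) /\
    ((elt (EFin 0) (ediv a0 (sqrt (qform S f0))) /\
      Forall (fun p => elt (ediv a0 (sqrt (qform S f0)))
                           (ediv (snd p) (sqrt (qform S (fst p))))) l)
     \/
     (a0 < 0 /\ Forall (fun p => 0 < snd p) l)).

Definition is_basis (n : nat) (B : (vec n -> Prop) -> Prop) : Prop :=
  (forall U, B U -> is_open U) /\
  (forall W, is_open W -> forall x, W x ->
     exists U, B U /\ U x /\ forall y, U y -> W y).

(* Main.v *)
Require Import Defs.
From Stdlib Require Import Reals List Lra Classical ClassicalEpsilon FunctionalExtensionality PropExtensionality.
From HB Require Import structures.
From mathcomp Require Import all_boot ssralg matrix mxalgebra.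
Open Scope R_scope.

Definition Reqb (x y : R) : bool := if Req_EM_T x y then true else false.
Lemma ReqbP : Equality.axiom Reqb.
Proof. move=> x y; rewrite /Reqb; case: Req_EM_T => h; [exact: ReflectT|exact: ReflectF]. Qed.
HB.instance Definition _ := hasDecEq.Build R ReqbP.

Definition Rfind (P : pred R) (n : nat) : option R :=
  match excluded_middle_informative (exists x, P x) with
  | left h => Some (proj1_sig (constructive_indefinite_description _ h))
  | right _ => None end.
Lemma Rfind_some P n x : Rfind P n = Some x -> P x.
Proof. rewrite /Rfind; case: excluded_middle_informative => // h [<-].
exact: (proj2_sig (constructive_indefinite_description _ h)). Qed.
Lemma Rfind_ex (P : pred R) : (exists x, P x) -> exists n, Rfind P n.
Proof. move=> h; exists 0%N; rewrite /Rfind; case: excluded_middle_informative => //. Qed.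
Lemma Rfind_ext (P Q : pred R) : P =1 Q -> Rfind P =1 Rfind Q.
Proof. move=> h; have -> : P = Q by apply: functional_extensionality. by []. Qed.
HB.instance Definition _ := hasChoice.Build R Rfind_some Rfind_ex Rfind_ext.

Lemma Radd0 : left_id 0 Rplus. Proof. move=> x; lra. Qed.
Lemma RaddN : left_inverse 0 Ropp Rplus. Proof. move=> x; lra. Qed.
Lemma RaddA : associative Rplus. Proof. move=> x y z; ring. Qed.
Lemma RaddC : commutative Rplus. Proof. move=> x y; ring. Qed.
Lemma RmulA : associative Rmult. Proof. move=> x y z; ring. Qed.
Lemma RmulC : commutative Rmult. Proof. move=> x y; ring. Qed.
HB.instance Definition _ := GRing.isZmodule.Build R RaddA RaddC Radd0 RaddN.
Lemma Rmul1 : left_id 1 Rmult. Proof. move=> x; lra. Qed.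
Lemma RmulDl : left_distributive Rmult Rplus. Proof. move=> x y z; ring. Qed.
Lemma Roner : (1 != 0 :> R). Proof. apply/eqP; lra. Qed.
HB.instance Definition _ := GRing.Zmodule_isComNzRing.Build R RmulA RmulC Rmul1 RmulDl Roner.
Lemma RmulV (x : R) : x != 0 -> Rinv x * x = 1.
Proof. move/eqP=> h; by field. Qed.
HB.instance Definition _ := GRing.ComNzRing_isField.Build R RmulV Rinv_0.

HB.instance Definition _ := Monoid.isComLaw.Build R 0 Rplus RaddA RaddC Radd0.


Lemma Rmul0l : left_zero 0 Rmult. Proof. move=> x; ring. Qed.
Lemma Rmul0r : right_zero 0 Rmult. Proof. move=> x; ring. Qed.
Lemma RmulDr : right_distributive Rmult Rplus. Proof. move=> x y z; ring. Qed.
HB.instance Definition _ := Monoid.isMulLaw.Build R 0 Rmult Rmul0l Rmul0r.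
HB.instance Definition _ := Monoid.isAddLaw.Build R Rmult Rplus RmulDl RmulDr.

Notation "'SUM_' ( i < k ) F" := (\big[Rplus/0]_(i < k) F) (at level 41, i, k at level 50, F at level 41).

Lemma sum_add k (F G : 'I_k -> R) : SUM_(i < k) (F i + G i) = SUM_(i < k) F i + SUM_(i < k) G i.
Proof. exact: big_split. Qed.
Lemma sum_scal k c (F : 'I_k -> R) : SUM_(i < k) (c * F i) = c * SUM_(i < k) F i.
Proof. by rewrite big_distrr. Qed.
Lemma sum_ext k (F G : 'I_k -> R) : (forall i, F i = G i) -> SUM_(i < k) F i = SUM_(i < k) G i.
Proof. move=> h; exact: eq_bigr. Qed.
Lemma sum_swap k l (F : 'I_k -> 'I_l -> R) : SUM_(i < k) SUM_(j < l) F i j = SUM_(j < l) SUM_(i < k) F i j.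
Proof. exact: exchange_big. Qed.
Lemma sum0 k : SUM_(i < k) 0 = 0.
Proof. by rewrite big1. Qed.
Lemma sum_recr k (F : 'I_k.+1 -> R) : SUM_(i < k.+1) F i = SUM_(i < k) F (widen_ord (leqnSn k) i) + F ord_max.
Proof. exact: big_ord_recr. Qed.
Lemma sum_abs k (F : 'I_k -> R) : Rabs (SUM_(i < k) F i) <= SUM_(i < k) Rabs (F i).
Proof.
elim: k F => [|k IH] F; first by rewrite !big_ord0 Rabs_R0; apply: Rle_refl.
rewrite !sum_recr. eapply Rle_trans; first exact: Rabs_triang.
have := IH (fun i => F (widen_ord (leqnSn k) i)). lra.
Qed.
Lemma sum_le k (F G : 'I_k -> R) : (forall i, F i <= G i) -> SUM_(i < k) F i <= SUM_(i < k) G i.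
Proof.
elim: k F G => [|k IH] F G h; first by rewrite !big_ord0; lra.
rewrite !sum_recr. have := IH (fun i => F (widen_ord (leqnSn k) i)) (fun i => G (widen_ord (leqnSn k) i)) (fun i => h _). have := h ord_max. lra.
Qed.
Lemma sum_nonneg k (F : 'I_k -> R) : (forall i, 0 <= F i) -> 0 <= SUM_(i < k) F i.
Proof. move=> h; have := @sum_le k (fun _ => 0) F h; by rewrite sum0. Qed.
Lemma sum_single k (F : 'I_k -> R) j : (forall i, i != j -> F i = 0) -> SUM_(i < k) F i = F j.
Proof. move=> h. rewrite (bigD1 j) //= big1 => [|i /h //]. change (F j + 0 = F j). ring. Qed.
Lemma le_sum_single k (F : 'I_k -> R) j : (forall i, 0 <= F i) -> F j <= SUM_(i < k) F i.
Proof. move=> h. rewrite (bigD1 j) //=.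
have H : 0 <= \big[Rplus/0]_(i < k | i != j) F i.
  apply: big_ind => //; [apply: Rle_refl | move=> x y; lra].
change (F j <= F j + \big[Rplus/0]_(i < k | i != j) F i). lra.
Qed.

Lemma sumRE k (F : 'I_k -> R) : (\sum_(i < k) F i)%R = SUM_(i < k) F i.
Proof. by []. Qed.
Lemma mulRE (a b : R) : GRing.mul a b = a * b. Proof. by []. Qed.
Lemma zeroRE : (@GRing.zero R) = 0. Proof. by []. Qed.

Section MX.
Variables (m n : nat) (M : 'I_m -> 'I_n -> R).

Lemma coord_functionals :
  (forall v : vec n, (forall f : vec m, pairing M f v = 0) -> forall j, v j = 0) ->
  exists G : 'I_n -> vec m, forall j (nu : vec n), pairing M (G j) nu = nu j.
Proof.
move=> h.
pose Mx : 'M[R]_(m, n) := (\matrix_(i, j) M i j)%R.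
have hk : (kermx Mx^T == 0)%R.
  set K := kermx Mx^T.
  rewrite -submx0; apply/row_subP => i.
  have : (row i (K) <= K)%MS by exact: row_sub.
  move/sub_kermxP => e. clearbody K.
  have -> : row i (K) = 0%R.
    apply/matrixP => a b; rewrite (ord1 a) mxE.
    pose v : vec n := fun j => K i j.
    have hv : forall f : vec m, pairing M f v = 0.
      move=> f; rewrite /pairing.
      transitivity (SUM_(k < m) (f k * 0)).
        apply: sum_ext => k; have := congr1 (fun A : 'M[R]_(1,m) => A ord0 k) e.
        rewrite !mxE /= => E.
        transitivity (f k * (\sum_(j<n) row i K ord0 j * Mx^T j k)%R); last by rewrite E.
        rewrite sumRE -sum_scal; apply: sum_ext => j; rewrite !mxE mulRE /v; ring.
      by rewrite (@sum_ext _ _ (fun _ => 0)) ?sum0 // => k; ring.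
    transitivity 0; [exact: h v hv b | by rewrite mxE].
  exact: sub0mx.
have hf : row_full Mx.
  by rewrite /row_full -mxrank_tr; rewrite kermx_eq0 in hk.
case/row_fullP: hf => B hB.
exists (fun j i => B j i) => j nu.
rewrite /pairing.
have e1 : SUM_(i < m) SUM_(k < n) (M i k * B j i * nu k) = SUM_(k < n) ((1%:M : 'M[R]_n)%R j k * nu k).
  rewrite sum_swap; apply: sum_ext => k.
  rewrite -hB !mxE sumRE.
  have -> : SUM_(i < m) (M i k * B j i * nu k) = nu k * SUM_(i < m) (B j i * Mx i k).
    rewrite -sum_scal; apply: sum_ext => i; rewrite /Mx mxE; ring.
  exact: Rmult_comm.
rewrite e1 (@sum_single n _ j).
  by rewrite !mxE eqxx /=; exact: Rmult_1_l.
by move=> k hk'; rewrite !mxE eq_sym (negbTE hk') /=; exact: Rmult_0_l.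
Qed.

End MX.

Lemma split_sym (m : nat) (S : 'I_m -> 'I_m -> R) (w : vec m) :
 (exists z : vec m, forall i, SUM_(j<m) ((S i j + S j i) * z j) = w i) \/
 (exists v : vec m, (forall i, SUM_(j<m) ((S i j + S j i) * v j) = 0) /\ SUM_(i<m) (w i * v i) <> 0).
Proof.
pose A : 'M[R]_m := (\matrix_(i, j) (S i j + S j i))%R.
pose wr : 'M[R]_(1, m) := (\row_i w i)%R.
case: (boolP (wr <= A)%MS).
  case/submxP => D hD; left; exists (fun j => D ord0 j) => i.
  have := congr1 (fun X : 'M[R]_(1,m) => X ord0 i) hD; rewrite !mxE => ->.
  rewrite sumRE; apply: sum_ext => j; rewrite !mxE.
  transitivity (D ord0 j * (S j i + S i j)); [ring | reflexivity].
rewrite submxE => hne; right.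
have E0 := mulmx_coker A.
set C := cokermx A in hne E0 *. clearbody C.
have [j hj] : exists j, (wr *m C)%R ord0 j <> 0.
  apply: NNPP => hn; move/negP: hne; apply; apply/eqP/matrixP => a b.
  rewrite (ord1 a) [RHS]mxE; apply: NNPP => hb; apply: hn; exists b; exact: hb.
exists (fun i => C i j); split.
  move=> i.
  have := congr1 (fun X : 'M[R]_m => X i j) E0.
  rewrite [RHS]mxE mxE => E.
  transitivity ((\sum_(k<m) A i k * C k j)%R); last by rewrite E.
  rewrite sumRE; apply: sum_ext => k; rewrite /A mxE; reflexivity.
move: hj; rewrite mxE sumRE => hj; move=> e; apply: hj.
transitivity (SUM_(i<m) (w i * C i j)); last exact e.
apply: sum_ext => k; rewrite /wr mxE; reflexivity.
Qed.

Section Alg.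
Variables (m n : nat) (M : 'I_m -> 'I_n -> R) (S : 'I_m -> 'I_m -> R).

Definition vlin (f g : vec m) (c : R) : vec m := fun i => f i + c * g i.
Definition vsc (c : R) (f : vec m) : vec m := fun i => c * f i.

Lemma pairing_lin f g c nu : pairing M (vlin f g c) nu = pairing M f nu + c * pairing M g nu.
Proof.
rewrite /pairing -sum_scal -sum_add; apply: sum_ext => i.
rewrite -sum_scal -sum_add; apply: sum_ext => j; rewrite /vlin; ring.
Qed.
Lemma pairing_sc c f nu : pairing M (vsc c f) nu = c * pairing M f nu.
Proof.
rewrite /pairing -sum_scal; apply: sum_ext => i.
rewrite -sum_scal; apply: sum_ext => j; rewrite /vsc; ring.
Qed.
Lemma pairing0f nu : pairing M (fun _ => 0) nu = 0.
Proof.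
rewrite /pairing (@sum_ext _ _ (fun _ => 0)) ?sum0 // => i.
rewrite (@sum_ext _ _ (fun _ => 0)) ?sum0 // => j; ring.
Qed.
Lemma pairing_x0 f (x : vec n) : (forall j, x j = 0) -> pairing M f x = 0.
Proof.
move=> h; rewrite /pairing (@sum_ext _ _ (fun _ => 0)) ?sum0 // => i.
rewrite (@sum_ext _ _ (fun _ => 0)) ?sum0 // => j; rewrite h; ring.
Qed.
Lemma pairing_diff f (x y : vec n) : pairing M f y - pairing M f x =
  SUM_(i < m) SUM_(j < n) (M i j * f i * (y j - x j)).
Proof.
rewrite /pairing.
have -> : forall a b : R, a - b = a + (-1) * b by move=> a b; ring.
rewrite -sum_scal -sum_add; apply: sum_ext => i.
rewrite -sum_scal -sum_add; apply: sum_ext => j; ring.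
Qed.

Definition wv (x : vec n) (i : 'I_m) : R := SUM_(j < n) (M i j * x j).
Lemma pairing_wv f x : pairing M f x = SUM_(i < m) (f i * wv x i).
Proof.
rewrite /pairing; apply: sum_ext => i; rewrite /wv -sum_scal; apply: sum_ext => j; ring.
Qed.

Definition Bl (f g : vec m) : R := SUM_(i < m) SUM_(j < m) (S i j * f i * g j).
Definition Cf (f g : vec m) : R := Bl f g + Bl g f.
Lemma qformE f : qform S f = Bl f f. Proof. by []. Qed.
Lemma Bl_linl f g c h : Bl (vlin f g c) h = Bl f h + c * Bl g h.
Proof.
rewrite /Bl -sum_scal -sum_add; apply: sum_ext => i.
rewrite -sum_scal -sum_add; apply: sum_ext => j; rewrite /vlin; ring.
Qed.
Lemma Bl_linr f g c h : Bl h (vlin f g c) = Bl h f + c * Bl h g.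
Proof.
rewrite /Bl -sum_scal -sum_add; apply: sum_ext => i.
rewrite -sum_scal -sum_add; apply: sum_ext => j; rewrite /vlin; ring.
Qed.
Lemma Bl_scl c f h : Bl (vsc c f) h = c * Bl f h.
Proof.
rewrite /Bl -sum_scal; apply: sum_ext => i.
rewrite -sum_scal; apply: sum_ext => j; rewrite /vsc; ring.
Qed.
Lemma Bl_scr c f h : Bl h (vsc c f) = c * Bl h f.
Proof.
rewrite /Bl -sum_scal; apply: sum_ext => i.
rewrite -sum_scal; apply: sum_ext => j; rewrite /vsc; ring.
Qed.
Lemma Q_lin f g c : qform S (vlin f g c) = qform S f + c * Cf f g + c * c * qform S g.
Proof. rewrite !qformE /Cf Bl_linl !Bl_linr; ring. Qed.
Lemma Q_sc c f : qform S (vsc c f) = c * c * qform S f.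
Proof. rewrite !qformE Bl_scl Bl_scr; ring. Qed.
Lemma Cf_sym f g : Cf f g = Cf g f.
Proof. rewrite /Cf; ring. Qed.
Lemma Cf_scl c f g : Cf (vsc c f) g = c * Cf f g.
Proof. rewrite /Cf Bl_scl Bl_scr; ring. Qed.
Lemma Cf_form g h : Cf g h = SUM_(i < m) (g i * SUM_(j < m) ((S i j + S j i) * h j)).
Proof.
rewrite /Cf /Bl.
rewrite [X in _ + X = _]sum_swap -sum_add; apply: sum_ext => i.
rewrite -sum_scal -sum_add; apply: sum_ext => j; ring.
Qed.

End Alg.
Arguments vsc {m}. Arguments vlin {m}. Arguments wv {m n}. Arguments Cf {m}. Arguments Bl {m}.

Lemma open_ext (n : nat) (A B : vec n -> Prop) : (forall y, A y <-> B y) -> is_open A -> is_open B.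
Proof.
move=> h hA x /h hx; case: (hA x hx) => eps [he H]; exists eps; split => // y hy; apply/h; exact: H.
Qed.
Lemma open_and (n : nat) (A B : vec n -> Prop) : is_open A -> is_open B -> is_open (fun y => A y /\ B y).
Proof.
move=> hA hB x [ha hb]; case: (hA x ha) => e1 [h1 H1]; case: (hB x hb) => e2 [h2 H2].
exists (Rmin e1 e2); split; first by apply: Rmin_pos.
move=> y hy; split; [apply: H1 | apply: H2] => j; have := hy j;
  have := Rmin_l e1 e2; have := Rmin_r e1 e2; lra.
Qed.
Lemma open_true (n : nat) : is_open (fun _ : vec n => True).
Proof. move=> x _; exists 1; split => //; lra. Qed.

Lemma fin_min k (d : 'I_k -> R) : (forall j, 0 < d j) -> exists eps, 0 < eps /\ forall j, eps <= d j.
Proof.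
move=> hd; pose s := SUM_(j < k) / d j.
have hs : 0 <= s by apply: sum_nonneg => j; left; apply: Rinv_0_lt_compat.
exists (/ (1 + s)); split; first by apply: Rinv_0_lt_compat; lra.
move=> j; have h1 : / d j <= s by apply: (@le_sum_single k (fun j => / d j)) => i; left; apply: Rinv_0_lt_compat.
have hj := hd j.
rewrite -(Rinv_inv (d j)); apply: Rinv_le_contravar; [apply: Rinv_0_lt_compat => // | lra].
Qed.

Lemma open_box (n : nat) (x : vec n) e : is_open (fun y : vec n => forall j, Rabs (y j - x j) < e).
Proof.
move=> y hy; case: (@fin_min n (fun j => e - Rabs (y j - x j))) => [j|eps [he H]].
  have := hy j; lra.
exists eps; split => // z hz j.
have := H j; have := hz j; have := Rabs_triang (z j - y j) (y j - x j).
have -> : z j - y j + (y j - x j) = z j - x j by ring.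
lra.
Qed.

Section Open.
Variables (m n : nat) (M : 'I_m -> 'I_n -> R).

Lemma pairing_cont (f : vec m) : exists L, 0 <= L /\ forall (x y : vec n) eta,
  (forall j, Rabs (y j - x j) < eta) -> Rabs (pairing M f y - pairing M f x) <= L * eta.
Proof.
exists (SUM_(i < m) SUM_(j < n) Rabs (M i j * f i)); split.
  apply: sum_nonneg => i; apply: sum_nonneg => j; exact: Rabs_pos.
move=> x y eta h; rewrite pairing_diff.
eapply Rle_trans; first exact: sum_abs.
rewrite Rmult_comm -sum_scal; apply: sum_le => i.
eapply Rle_trans; first exact: sum_abs.
rewrite -sum_scal; apply: sum_le => j.
rewrite Rabs_mult; have := h j; have := Rabs_pos (M i j * f i); have := Rabs_pos (y j - x j); nra.
Qed.

Lemma open_gt (f : vec m) a : is_open (fun y => pairing M f y > a).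
Proof.
case: (pairing_cont f) => L [hL H] x hx.
exists ((pairing M f x - a) / (L + 1)); split.
  apply: Rdiv_lt_0_compat; lra.
move=> y hy; have := H x y _ hy.
have : L * ((pairing M f x - a) / (L + 1)) < pairing M f x - a.
  have -> : L * ((pairing M f x - a) / (L + 1)) = (pairing M f x - a) * (L / (L+1)) by field; lra.
  have : L / (L + 1) < 1.
    have hi := Rinv_0_lt_compat (L+1) ltac:(lra).
    replace (L/(L+1)) with (1 - /(L+1)) by (field; lra). lra.
  nra.
move=> h1 h2; have := Rle_abs (pairing M f x - pairing M f y).
rewrite Rabs_minus_sym in h2. lra.
Qed.

Lemma open_lt (f : vec m) a : is_open (fun y => pairing M f y < a).
Proof.
case: (pairing_cont f) => L [hL H] x hx.
exists ((a - pairing M f x) / (L + 1)); split.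
  apply: Rdiv_lt_0_compat; lra.
move=> y hy; have := H x y _ hy.
have : L * ((a - pairing M f x) / (L + 1)) < a - pairing M f x.
  have -> : L * ((a - pairing M f x) / (L + 1)) = (a - pairing M f x) * (L / (L+1)) by field; lra.
  have : L / (L + 1) < 1.
    have hi := Rinv_0_lt_compat (L+1) ltac:(lra).
    replace (L/(L+1)) with (1 - /(L+1)) by (field; lra). lra.
  nra.
move=> h1 h2; have := Rle_abs (pairing M f y - pairing M f x). lra.
Qed.

Lemma open_forall (l : list (vec m * R)) :
  is_open (fun nu => Forall (fun p => pairing M (fst p) nu < snd p) l).
Proof.
elim: l => [|p l IH].
  apply: (@open_ext _ (fun _ => True)); last exact: open_true.
  by move=> y; split => // _; constructor.
apply: (@open_ext _ (fun nu => pairing M (fst p) nu < snd p /\ Forall (fun p => pairing M (fst p) nu < snd p) l)).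
  by move=> y; rewrite Forall_cons_iff.
apply: open_and => //; exact: open_lt.
Qed.

End Open.

Lemma inIn (T : eqType) (x : T) (s : seq T) : x \in s -> In x s.
Proof. elim: s => [|y s IH] //=; rewrite inE => /orP [/eqP ->|/IH]; [left | right]. done. done. Qed.
Lemma In_enum {T : finType} (x : T) : In x (enum {: T}).
Proof. apply: inIn; by rewrite mem_enum. Qed.

Lemma ediv_nz a b : b <> 0 -> ediv a b = EFin (a / b).
Proof. rewrite /ediv => h; by case: Req_EM_T. Qed.

Lemma quad0 a b : 0 <= a -> (forall c, 0 <= c * b + c * c * a) -> b = 0.
Proof.
move=> ha h; apply: NNPP => hb.
pose t := / (2 * (a + 1)).
have ht : 0 < t by apply: Rinv_0_lt_compat; lra.
have hta : t * a < 1.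
  have -> : t * a = 1/2 - t by rewrite /t; field; lra.
  lra.
have := h (- b * t).
have hb2 : 0 < b * b by apply: Rsqr_pos_lt.
have -> : - b * t * b + - b * t * (- b * t) * a = (b * b) * t * (t * a - 1) by ring.
have hbt : 0 < b * b * t by nra.
move=> H; have : 0 < b * b * t * (1 - t * a) by apply: Rmult_lt_0_compat; lra.
lra.
Qed.

Lemma ratio_lt p q A B : 0 < A -> 0 < B -> 0 <= p -> 0 < q -> p * p * B < q * q * A ->
  p / sqrt A < q / sqrt B.
Proof.
move=> hA hB hp hq h.
have sA := sqrt_lt_R0 A hA; have sB := sqrt_lt_R0 B hB.
have e1 : p * sqrt B < q * sqrt A.
  have hu : 0 <= p * sqrt B by nra.
  have hv : 0 <= q * sqrt A by nra.
  apply: Rsqr_incrst_0 => //; rewrite /Rsqr.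
  have -> : p * sqrt B * (p * sqrt B) = p * p * (sqrt B * sqrt B) by ring.
  have -> : q * sqrt A * (q * sqrt A) = q * q * (sqrt A * sqrt A) by ring.
  rewrite !sqrt_sqrt; lra.
have -> : p / sqrt A = (p * sqrt B) * / (sqrt A * sqrt B) by field; lra.
have -> : q / sqrt B = (q * sqrt A) * / (sqrt A * sqrt B) by field; lra.
apply: Rmult_lt_compat_r => //; apply: Rinv_0_lt_compat; nra.
Qed.

Theorem mainTheorem9 (m n : nat) (M : 'I_m -> 'I_n -> R) (S : 'I_m -> 'I_m -> R)
  (hM : nondegenerate M) (hS : psd S) :
  is_basis (fun U : vec n -> Prop => inU0 M S U \/ inU1 M S U).
Proof.
split.
  move=> U [[hU _] | [f0 [a0 [l [hU _]]]]] //.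
  apply: (@open_ext _ (fun nu => pairing M f0 nu > a0 /\ Forall (fun p => pairing M (fst p) nu < snd p) l)).
    by move=> y; split => /hU.
  apply: open_and; [exact: open_gt | exact: open_forall].
move=> W hW x hx.
case: (hW x hx) => e [he HW].
case: (@coord_functionals m n M (proj2 hM)) => G hG.
case: (classic (forall j, x j = 0)) => [hx0 | hxn].
  pose l0 := List.map (fun jb : 'I_n * bool => (vsc (if jb.2 then 1 else -1) (G jb.1), e/2)) (enum {: 'I_n * bool}).
  exists (fun nu => pairing M (fun _ => 0) nu > -1 /\ Forall (fun p => pairing M (fst p) nu < snd p) l0).
  split; [|split].
  - right; exists (fun _ => 0), (-1), l0; split; first by move=> nu; split.
    right; split; first lra.
    apply/Forall_forall => p /in_map_iff [jb [<- _]] /=; lra.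
  - split; first by rewrite pairing0f; lra.
    apply/Forall_forall => p /in_map_iff [jb [<- _]] /=.
    rewrite pairing_sc hG hx0; lra.
  - move=> y [_ hy]; apply: HW => j.
    have h1 := proj1 (Forall_forall _ _) hy _ (List.in_map (fun jb : 'I_n * bool => (vsc (if jb.2 then 1 else -1) (G jb.1), e/2)) _ (j, true) (In_enum (j, true))).
    have h2 := proj1 (Forall_forall _ _) hy _ (List.in_map (fun jb : 'I_n * bool => (vsc (if jb.2 then 1 else -1) (G jb.1), e/2)) _ (j, false) (In_enum (j, false))).
    rewrite /= !pairing_sc !hG in h1 h2.
    rewrite hx0 Rminus_0_r; apply: Rabs_def1; lra.
have [h0 hh0] : exists h, pairing M h x <> 0.
  apply: NNPP => H; apply: hxn; apply: (proj2 hM) => f; apply: NNPP => H2; apply: H; by exists f.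
case: (@split_sym m S (wv M x)) => [[z hz] | [v [hv hvw]]]; last first.
  have hvx : pairing M v x <> 0.
    by rewrite pairing_wv => H; apply: hvw; rewrite -[RHS]H; apply: sum_ext => i; ring.
  have hqv : qform S v = 0.
    have : Cf S v v = 0.
      rewrite Cf_form (@sum_ext _ _ (fun _ => 0)) ?sum0 // => i; rewrite hv; ring.
    rewrite /Cf -qformE; lra.
  pose f := vsc (/ pairing M v x) v.
  have hfx : pairing M f x = 1 by rewrite pairing_sc; field.
  have hqf : qform S f = 0 by rewrite Q_sc hqv; ring.
  exists (fun nu => pairing M f nu > 1/2 /\ forall j, Rabs (nu j - x j) < e).
  split; [|split].
  - left; split; first by apply: open_and; [exact: open_gt | exact: open_box].
    exists f, (1/2); split; first lra; split => //.
    by move=> nu [].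
  - split; first by rewrite hfx; lra.
    by move=> j; rewrite Rminus_diag Rabs_R0.
  - by move=> y [_ hy]; apply: HW.
have hC : forall g, Cf S g z = pairing M g x.
  move=> g; rewrite Cf_form pairing_wv; apply: sum_ext => i; by rewrite hz.
set s := pairing M z x.
have hs : s = 2 * qform S z by rewrite /s -hC /Cf qformE; ring.
have hqz : 0 < qform S z.
  case: (hS z) => // hq0; exfalso; apply: hh0.
  rewrite -hC Cf_sym; apply: (@quad0 (qform S h0)); first exact: hS.
  by move=> c; have := hS (vlin z h0 c); rewrite Q_lin -hq0; lra.
have hs0 : 0 < s by lra.
pose f0 := vsc (/ s) z.
have hf0x : pairing M f0 x = 1 by rewrite pairing_sc -/s; field; lra.
have hq0 : 0 < qform S f0.
  rewrite Q_sc; have := Rinv_0_lt_compat s hs0; move=> hi.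
  apply: Rmult_lt_0_compat => //; nra.
have horth : forall g, pairing M g x = 0 -> Cf S f0 g = 0.
  by move=> g hg; rewrite Cf_scl Cf_sym hC hg; ring.
pose g' j := vlin (G j) f0 (- x j).
have hg'x : forall j, pairing M (g' j) x = 0.
  by move=> j; rewrite pairing_lin hG hf0x; ring.
have hg'nu : forall j nu, pairing M (g' j) nu = nu j - x j * pairing M f0 nu.
  by move=> j nu; rewrite pairing_lin hG; ring.
set q0 := qform S f0 in hq0 *.
pose T := SUM_(j < n) qform S (g' j).
have hT : forall j, qform S (g' j) <= T.
  move=> j; apply: (@le_sum_single n (fun j => qform S (g' j))) => i; exact: hS.
have hT0 : 0 <= T by apply: sum_nonneg => i; exact: hS.
have hqT : 0 < q0 / (1 + T) by apply: Rdiv_lt_0_compat; lra.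
pose c := sqrt (q0 / (1 + T)).
have hc : 0 < c by apply: sqrt_lt_R0.
have hc2 : c * c = q0 / (1 + T) by apply: sqrt_sqrt; lra.
pose X := SUM_(j < n) Rabs (x j).
have hX : forall j, Rabs (x j) <= X.
  move=> j; apply: (@le_sum_single n (fun j => Rabs (x j))) => i; exact: Rabs_pos.
have hX0 : 0 <= X by apply: sum_nonneg => i; exact: Rabs_pos.
have h2c : 0 < 2 / c by apply: Rdiv_lt_0_compat; lra.
pose D := 2 / c + X + 1.
have hD : 1 < D by rewrite /D; lra.
pose d := Rmin (1/2) (e / D).
have hd0 : 0 < d by apply: Rmin_pos; [lra | apply: Rdiv_lt_0_compat; lra].
have hd1 : d <= 1/2 by apply: Rmin_l.
have hdD : d * D <= e.
  have : d <= e / D by apply: Rmin_r.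
  move=> h; apply: (Rle_trans _ (e / D * D)).
    apply: Rmult_le_compat_r; lra.
  right; field; lra.
pose eps := d * d.
have heps : 0 < eps < 1 by rewrite /eps; nra.
have hepsd : eps <= d by rewrite /eps; nra.
pose K := d * c.
have hK : 0 < K by apply: Rmult_lt_0_compat.
have hK2 : forall j, K * K * qform S (g' j) <= eps * q0.
  move=> j; have hQ := hS (g' j).
  have -> : K * K * qform S (g' j) = eps * q0 * (qform S (g' j) / (1 + T)).
    rewrite /K /eps; have -> : d * c * (d * c) = d * d * (c * c) by ring.
    rewrite hc2; field; lra.
  have : qform S (g' j) / (1 + T) <= 1.
    apply: (Rle_trans _ ((1 + T) / (1 + T))); last by right; field; lra.
    apply: Rmult_le_compat_r; [left; apply: Rinv_0_lt_compat; lra | have := hT j; lra].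
  have : 0 < eps * q0 by nra.
  nra.
pose fc (jb : 'I_n * bool) := vlin f0 (g' jb.1) (if jb.2 then K else - K).
have hfcQ : forall jb, qform S (fc jb) = q0 + K * K * qform S (g' jb.1).
  move=> jb; rewrite /fc Q_lin horth ?hg'x // -/q0; case: jb.2; ring.
pose l := (f0, 1 + eps) :: List.map (fun jb => (fc jb, 1 + eps)) (enum {: 'I_n * bool}).
have sq0 := sqrt_lt_R0 _ hq0.
exists (fun nu => pairing M f0 nu > 1 - eps /\ Forall (fun p => pairing M (fst p) nu < snd p) l).
split; [|split].
- right; exists f0, (1 - eps), l; split; first by move=> nu; split.
  left; rewrite -/q0 ediv_nz; last lra.
  split; first by apply: Rdiv_lt_0_compat; lra.
  apply/Forall_forall => p; case => [<- | /in_map_iff [jb [<- _]]] /=.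
    rewrite -/q0 ediv_nz; last lra.
    apply: Rmult_lt_compat_r; [apply: Rinv_0_lt_compat; lra | lra].
  have hQp : 0 < qform S (fc jb).
    rewrite hfcQ; have := hS (g' jb.1); nra.
  rewrite ediv_nz; last by have := sqrt_lt_R0 _ hQp; lra.
  apply: ratio_lt => //; try lra.
  rewrite hfcQ; have hY := hK2 jb.1.
  have h1 : (1-eps)*(1-eps)*(q0 + K * K * qform S (g' jb.1)) <= (1-eps)*(1-eps)*(q0 + eps*q0).
    apply: Rmult_le_compat_l; [nra | lra].
  have E : (1+eps)*(1+eps)*q0 - (1-eps)*(1-eps)*(q0+eps*q0) = q0*(1+eps)*(eps*(3-eps)) by ring.
  have : 0 < q0*(1+eps)*(eps*(3-eps)).
    apply: Rmult_lt_0_compat; [apply: Rmult_lt_0_compat; lra | apply: Rmult_lt_0_compat; lra].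
  lra.
- split; first by rewrite hf0x; lra.
  apply/Forall_forall => p; case => [<- | /in_map_iff [jb [<- _]]] /=.
    rewrite hf0x; lra.
  rewrite /fc pairing_lin hf0x hg'x; lra.
- move=> y [hy1 hy2]; apply: HW => j.
  have hA := proj1 (Forall_forall _ _) hy2 (f0, 1 + eps) (or_introl erefl).
  have hB := proj1 (Forall_forall _ _) hy2 _ (or_intror (List.in_map (fun jb => (fc jb, 1 + eps)) _ (j, true) (In_enum (j, true)))).
  have hC' := proj1 (Forall_forall _ _) hy2 _ (or_intror (List.in_map (fun jb => (fc jb, 1 + eps)) _ (j, false) (In_enum (j, false)))).
  rewrite /= /fc /= in hA hB hC'; rewrite pairing_lin in hB; rewrite pairing_lin in hC'.
  move: hA hB hC' hy1; rewrite -!/(pairing M f0 y).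
  set P := pairing M f0 y; set pg := pairing M (g' j) y => hA hB hC' hy1.
  have hKpg : Rabs (K * pg) < 2 * eps by apply: Rabs_def1; lra.
  rewrite Rabs_mult (Rabs_pos_eq K) in hKpg; last lra.
  have hpc : Rabs pg * c < 2 * d.
    apply: (Rmult_lt_reg_l d) => //.
    have -> : d * (Rabs pg * c) = K * Rabs pg by rewrite /K; ring.
    have -> : d * (2 * d) = 2 * eps by rewrite /eps; ring.
    done.
  have hpg : Rabs pg < d * (2 / c).
    apply: (Rmult_lt_reg_r c) => //.
    have -> : d * (2 / c) * c = 2 * d by field; lra.
    done.
  have hP1 : Rabs (P - 1) < eps by apply: Rabs_def1; lra.
  have -> : y j - x j = pg + x j * (P - 1) by rewrite /pg hg'nu -/P; ring.
  eapply Rle_lt_trans; first exact: Rabs_triang.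
  rewrite Rabs_mult.
  have : Rabs (x j) * Rabs (P - 1) <= X * d.
    apply: Rmult_le_compat; try exact: Rabs_pos; [exact: hX | lra].
  have : d * (2 / c) + X * d = d * D - d by rewrite /D; ring.
  lra.
Qed.
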